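(* Let $\mathcal{A}$ be a complex Banach algebra with identity, let $a\in\mathcal{A}$ and let $(a_n)$ be a sequence in $\mathcal{A}$ such that $a_na=aa_n$ and $a_na_m=a_ma_n$ for all $n,m\in\mathbb{N}$. If $a_n\overset{\nu}{\to}a$ and $0$ is an accumulation point of $\sigma(a)$, then $\sigma(a_n)\to\sigma(a)$ in the Hausdorff metric.
   Context: $\sigma(x)$ denotes the spectrum of $x$ in $\mathcal{A}$. A sequence $(x_n)$ in $\mathcal{A}$ is $\nu$-convergent to $x$, written $x_n\overset{\nu}{\to}x$, if $(\|x_n\|)$ is bounded, $\|(x_n-x)x\|\to0$ and $\|(x_n-x)x_n\|\to0$. Convergence of spectra is with respect to the Hausdorff metric on nonempty compact subsets of $\mathbb{C}$. *)

(* Defs.v *)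
From HB Require Import structures.
From mathcomp Require Import all_boot all_order all_algebra.
From mathcomp Require Import all_classical all_reals all_analysis.
From mathcomp Require Import complex.
Set Implicit Arguments. Unset Strict Implicit. Unset Printing Implicit Defensive.
Import Order.TTheory GRing.Theory Num.Theory numFieldNormedType.Exports.
Local Open Scope classical_set_scope.
Local Open Scope ring_scope.

Record banach_alg (K : numFieldType) (V : completeNormedModType K) := BanachAlg {
  bmul : V -> V -> V;
  bone : V;
  bmulA : associative bmul;
  bmul1l : left_id bone bmul;
  bmul1r : right_id bone bmul;
  bmulDl : left_distributive bmul +%R;
  bmulDr : right_distributive bmul +%R;
  bmulZl : forall (k : K) (x y : V), bmul (k *: x) y = k *: bmul x y;
  bmulZr : forall (k : K) (x y : V), bmul x (k *: y) = k *: bmul x y;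
  bone_neq0 : bone != 0;
  bnormM : forall x y : V, `|bmul x y| <= `|x| * `|y| }.

Definition spectrum (K : numFieldType) (V : completeNormedModType K)
    (B : banach_alg V) (x : V) : set K :=
  [set l | ~ exists y : V, bmul B y (l *: bone B - x) = bone B
                        /\ bmul B (l *: bone B - x) y = bone B].

Definition nu_cvg (K : numFieldType) (V : completeNormedModType K)
    (B : banach_alg V) (x : nat -> V) (a : V) :=
  [/\ exists M : K, forall n, `|x n| <= M,
      (fun n => `|bmul B (x n - a) a|) @ \oo --> (0 : K) &
      (fun n => `|bmul B (x n - a) (x n)|) @ \oo --> (0 : K)].

Definition cdist (R : rcfType) (z w : R[i]) : R := Normc.normc (z - w).

Local Open Scope ereal_scope.
Definition hausdorff_dist (R : realType) (S T : set R[i]) : \bar R :=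
  maxe (ereal_sup [set ereal_inf [set (cdist x y)%:E | y in T] | x in S])
       (ereal_sup [set ereal_inf [set (cdist x y)%:E | x in S] | y in T]).

(* Main.v *)
Require Import Defs.
From HB Require Import structures.
From mathcomp Require Import all_boot all_order all_algebra.
From mathcomp Require Import all_classical all_reals all_analysis.
From mathcomp Require Import complex.
From mathcomp Require Import ring lra.
Import Order.TTheory GRing.Theory Num.Theory numFieldNormedType.Exports.
Local Open Scope classical_set_scope.
Local Open Scope ring_scope.
Set Implicit Arguments. Unset Strict Implicit. Unset Printing Implicit Defensive.

Section BA.
Variables (R : realType) (V : completeNormedModType R[i]) (B : banach_alg V).

Local Notation "x ** y" := (bmul B x y) (at level 40, left associativity).
Local Notation e := (bone B).
Local Notation nc := (@Normc.normc R).

Definition nv (x : V) : R := complex.Re `|x|.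

Lemma nvE x : `|x| = (nv x)%:C%C.
Proof.
have := normr_ge0 x; rewrite /nv; case: (`|x|) => a b /=.
by rewrite /Order.le /= => /andP[/eqP -> _].
Qed.

Lemma nv_ge0 x : 0 <= nv x.
Proof. by have := normr_ge0 x; rewrite nvE -(rmorph0 (real_complex R)) lecR. Qed.

Lemma lecR' (a b : R) : ((a%:C)%C <= (b%:C)%C :> R[i]) = (a <= b).
Proof. exact: lecR. Qed.

Lemma ltcR' (a b : R) : ((a%:C)%C < (b%:C)%C :> R[i]) = (a < b).
Proof. by rewrite !lt_def lecR' eq_complex /= eqxx andbT. Qed.

Lemma nvD x y : nv (x + y) <= nv x + nv y.
Proof. by have := ler_normD x y; rewrite !nvE -rmorphD lecR'. Qed.

Lemma nvN x : nv (- x) = nv x.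
Proof. by rewrite /nv normrN. Qed.

Lemma nvB x y : nv (x - y) = nv (y - x).
Proof. by rewrite /nv distrC. Qed.

Lemma nv0 : nv 0 = 0.
Proof. by rewrite /nv normr0. Qed.

Lemma nv_eq0 x : nv x = 0 -> x = 0.
Proof. by move=> h; apply/normr0_eq0; rewrite nvE h. Qed.

Lemma ncE (k : R[i]) : `|k| = (nc k)%:C%C.
Proof. by []. Qed.

Lemma nc_ge0 (k : R[i]) : 0 <= nc k.
Proof. by case: k => a b; rewrite /Normc.normc sqrtr_ge0. Qed.

Lemma nvZ (k : R[i]) x : nv (k *: x) = nc k * nv x.
Proof. by rewrite /nv normrZ ncE nvE -rmorphM. Qed.

Lemma nvM x y : nv (x ** y) <= nv x * nv y.
Proof. by have := bnormM B x y; rewrite !nvE -rmorphM lecR'. Qed.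

Lemma ncM (a b : R[i]) : nc (a * b) = nc a * nc b.
Proof. exact: Normc.normcM. Qed.

Lemma ncD (a b : R[i]) : nc (a + b) <= nc a + nc b.
Proof. by have := ler_normD a b; rewrite !ncE -rmorphD lecR'. Qed.

Lemma ncN (a : R[i]) : nc (- a) = nc a.
Proof. by have := normrN a; rewrite !ncE => -[]. Qed.

Lemma ncB (a b : R[i]) : nc (a - b) = nc (b - a).
Proof. by rewrite -ncN opprB. Qed.

Lemma ncR (a : R) : nc (a%:C)%C = `|a|.
Proof. by rewrite /Normc.normc /= expr0n /= addr0 sqrtr_sqr. Qed.

Lemma ncX (a : R[i]) n : nc (a ^+ n) = nc a ^+ n.
Proof. by elim: n => [|n IH]; rewrite ?expr0 ?Normc.normc1 // !exprS ncM IH. Qed.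

Lemma bmul0r x : 0 ** x = 0.
Proof. by apply/(addrI (0 ** x)); rewrite -(bmulDl B) !addr0. Qed.
Lemma bmulr0 x : x ** 0 = 0.
Proof. by apply/(addrI (x ** 0)); rewrite -(bmulDr B) !addr0. Qed.
Lemma bmulNl x y : (- x) ** y = - (x ** y).
Proof. by apply/(addrI (x ** y)); rewrite -(bmulDl B) !subrr bmul0r. Qed.
Lemma bmulNr x y : x ** (- y) = - (x ** y).
Proof. by apply/(addrI (x ** y)); rewrite -(bmulDr B) !subrr bmulr0. Qed.
Lemma bmulBl x y z : (x - y) ** z = x ** z - y ** z.
Proof. by rewrite (bmulDl B) bmulNl. Qed.
Lemma bmulBr x y z : x ** (y - z) = x ** y - x ** z.
Proof. by rewrite (bmulDr B) bmulNr. Qed.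

Lemma bmulZl' k x y : (k *: x) ** y = k *: (x ** y). Proof. exact: bmulZl. Qed.
Lemma bmulZr' k x y : x ** (k *: y) = k *: (x ** y). Proof. exact: bmulZr. Qed.
Lemma bmulA' x y z : x ** (y ** z) = x ** y ** z. Proof. exact: bmulA. Qed.
Lemma bmul1l' x : e ** x = x. Proof. exact: bmul1l. Qed.
Lemma bmul1r' x : x ** e = x. Proof. exact: bmul1r. Qed.

Definition pw x n := iter n (bmul B x) e.
Definition cm x y := x ** y = y ** x.

Lemma pw0 x : pw x 0 = e. Proof. by []. Qed.
Lemma pwS x n : pw x n.+1 = x ** pw x n. Proof. by []. Qed.
Lemma pw1 x : pw x 1 = x. Proof. by rewrite pwS pw0 bmul1r'. Qed.

Lemma cm_sym x y : cm x y -> cm y x. Proof. by []. Qed.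
Lemma cm_refl x : cm x x. Proof. by []. Qed.
Lemma cm_e x : cm e x. Proof. by rewrite /cm bmul1l' bmul1r'. Qed.
Lemma cm_mull x y z : cm x z -> cm y z -> cm (x ** y) z.
Proof. by rewrite /cm => h1 h2; rewrite -bmulA' h2 !bmulA' h1. Qed.
Lemma cm_add x y z : cm x z -> cm y z -> cm (x + y) z.
Proof. by rewrite /cm => h1 h2; rewrite (bmulDl B) (bmulDr B) h1 h2. Qed.
Lemma cm_opp x z : cm x z -> cm (- x) z.
Proof. by rewrite /cm => h1; rewrite bmulNl bmulNr h1. Qed.
Lemma cm_sub x y z : cm x z -> cm y z -> cm (x - y) z.
Proof. by move=> h1 h2; apply: cm_add => //; apply: cm_opp. Qed.
Lemma cm_scale k x z : cm x z -> cm (k *: x) z.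
Proof. by rewrite /cm => h1; rewrite bmulZl' bmulZr' h1. Qed.
Lemma cm_0 z : cm 0 z.
Proof. by rewrite /cm bmul0r bmulr0. Qed.

Lemma cm_pw x y n : cm x y -> cm (pw x n) y.
Proof. by move=> h; elim: n => [|n IH]; [apply: cm_e | apply: cm_mull]. Qed.

Lemma pwSr x n : pw x n.+1 = pw x n ** x.
Proof. by rewrite pwS; apply: cm_sym; apply: cm_pw. Qed.

Lemma pwD x m n : pw x (m + n) = pw x m ** pw x n.
Proof.
by elim: m => [|m IH]; rewrite ?add0n ?pw0 ?bmul1l' // addSn !pwS IH bmulA'.
Qed.

Lemma pwM x m n : pw x (m * n) = pw (pw x m) n.
Proof.
elim: n => [|n IH]; first by rewrite muln0.
by rewrite mulnS pwD IH pwS.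
Qed.

Lemma pw_mul x y n : cm x y -> pw (x ** y) n = pw x n ** pw y n.
Proof.
move=> h; elim: n => [|n IH]; first by rewrite !pw0 bmul1l'.
rewrite !pwS IH !bmulA'; congr (_ ** _); rewrite -!bmulA'; congr (_ ** _).
by rewrite (cm_pw n h).
Qed.

Lemma pwZ k x n : pw (k *: x) n = k ^+ n *: pw x n.
Proof.
elim: n => [|n IH]; first by rewrite expr0 scale1r.
by rewrite !pwS IH bmulZl' bmulZr' scalerA exprS.
Qed.

Lemma nv_pw x n : nv (pw x n) <= nv e * nv x ^+ n.
Proof.
elim: n => [|n IH]; first by rewrite expr0 mulr1.
rewrite pwSr (le_trans (nvM _ _))// exprSr mulrA ler_wpM2r ?nv_ge0//.
Qed.

Lemma nv_pwS x n : nv (pw x n.+1) <= nv x ^+ n.+1.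
Proof.
elim: n => [|n IH]; first by rewrite pw1 expr1.
rewrite pwSr (le_trans (nvM _ _))// [X in _ <= X]exprSr ler_wpM2r ?nv_ge0//.
Qed.

Definition inv2 x y := y ** x = e /\ x ** y = e.
Definition isinv x := exists y, inv2 x y.

Lemma inv2_uniq x y y' : inv2 x y -> inv2 x y' -> y = y'.
Proof.
move=> [h1 h2] [h3 h4].
by rewrite -[y]bmul1r' -h4 bmulA' h1 bmul1l'.
Qed.

Lemma cm_inv x y z : cm x z -> inv2 x y -> cm y z.
Proof.
move=> hc [h1 h2]; rewrite /cm.
rewrite -[y ** z]bmul1r' -h2 -[z ** y]bmul1l' -h1.
by rewrite !bmulA' -[y ** z ** x]bmulA' -hc !bmulA'.
Qed.

Lemma isinv_e : isinv e.
Proof. by exists e; split; rewrite bmul1l'. Qed.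

Lemma isinv_mul x1 x2 : isinv x1 -> isinv x2 -> isinv (x1 ** x2).
Proof.
move=> [y1 [h1 h2]] [y2 [h3 h4]]; exists (y2 ** y1); split.
  by rewrite bmulA' -[y2 ** y1 ** x1]bmulA' h1 bmul1r' h3.
by rewrite bmulA' -[x1 ** x2 ** y2]bmulA' h4 bmul1r' h2.
Qed.

Lemma isinv_factor x1 x2 : cm x1 x2 -> isinv (x1 ** x2) -> isinv x1.
Proof.
move=> hc [w [h1 h2]]; exists (x2 ** w); split; last by rewrite bmulA'.
have c1 : cm x1 (x1 ** x2) by rewrite /cm -bmulA' hc bmulA'.
have := cm_inv (cm_sym c1) (conj h1 h2); rewrite /cm => cw.
by rewrite -bmulA' cw bmulA' -hc.
Qed.

Lemma isinv_factor2 x1 x2 : cm x1 x2 -> isinv (x1 ** x2) -> isinv x2.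
Proof. by move=> hc; rewrite hc; apply: isinv_factor. Qed.

Lemma isinv_scale k x : k != 0 -> isinv x -> isinv (k *: x).
Proof.
move=> k0 [y [h1 h2]]; exists (k^-1 *: y); split.
  by rewrite bmulZl' bmulZr' scalerA mulVf // scale1r.
by rewrite bmulZl' bmulZr' scalerA mulfV // scale1r.
Qed.

Lemma ev_ex (P : nat -> Prop) : (\forall n \near \oo, P n) -> exists N, forall n, (N <= n)%N -> P n.
Proof. by case => N _ h; exists N. Qed.

Lemma posC (eps : R[i]) : 0 < eps -> eps = ((complex.Re eps)%:C)%C /\ 0 < complex.Re eps.
Proof. case: eps => a b; rewrite /Order.lt /= => /andP[/eqP -> h]; by []. Qed.

Lemma nv_small x : (forall eps, 0 < eps -> nv x <= eps) -> x = 0.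
Proof.
move=> h; apply: nv_eq0; apply/eqP; rewrite eq_le nv_ge0 andbT.
by apply/ler_addgt0Pr => eps he; rewrite add0r h.
Qed.

Lemma bmul_sumr x (s : seq nat) (f : nat -> V) :
  x ** (\sum_(i <- s) f i) = \sum_(i <- s) x ** f i.
Proof.
elim: s => [|a s IH]; first by rewrite !big_nil bmulr0.
by rewrite !big_cons (bmulDr B) IH.
Qed.

Lemma bmul_suml x (s : seq nat) (f : nat -> V) :
  (\sum_(i <- s) f i) ** x = \sum_(i <- s) f i ** x.
Proof.
elim: s => [|a s IH]; first by rewrite !big_nil bmul0r.
by rewrite !big_cons (bmulDl B) IH.
Qed.

Lemma nv_sum (s : seq nat) (f : nat -> V) :
  nv (\sum_(i <- s) f i) <= \sum_(i <- s) nv (f i).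
Proof.
elim: s => [|a s IH]; first by rewrite !big_nil nv0.
by rewrite !big_cons (le_trans (nvD _ _))// lerD2l.
Qed.

Definition psum z n := \sum_(0 <= i < n) pw z i.

Lemma psum_l z n : (e - z) ** psum z n = e - pw z n.
Proof.
elim: n => [|n IH]; first by rewrite /psum big_geq// bmulr0 pw0 subrr.
rewrite /psum big_nat_recr//= (bmulDr B) -/(psum z n) IH bmulBl bmul1l' -pwS.
by rewrite addrA subrK.
Qed.

Lemma psum_r z n : psum z n ** (e - z) = e - pw z n.
Proof.
elim: n => [|n IH]; first by rewrite /psum big_geq// bmul0r pw0 subrr.
rewrite /psum big_nat_recr//= (bmulDl B) -/(psum z n) IH bmulBr bmul1r' -pwSr.
by rewrite addrA subrK.
Qed.

Lemma geom_sum (q : R) m k :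
  (\sum_(m <= i < m + k) q ^+ i) * (1 - q) = q ^+ m - q ^+ (m + k).
Proof.
elim: k => [|k IH]; first by rewrite addn0 big_geq// mul0r subrr.
rewrite addnS big_nat_recr ?leq_addr//= mulrDl IH exprS.
by rewrite mulrBr mulr1 [q * _]mulrC addrA subrK.
Qed.

Lemma geom_le (q : R) m n : 0 <= q < 1 -> (m <= n)%N ->
  \sum_(m <= i < n) q ^+ i <= q ^+ m / (1 - q).
Proof.
move=> /andP[q0 q1] mn; rewrite -(subnKC mn).
have h1 : 0 < 1 - q by rewrite subr_gt0.
rewrite ler_pdivlMr// geom_sum lerBlDr lerDl exprn_ge0//.
Qed.

Lemma neumann z : nv z < 1 -> isinv (e - z).
Proof.
move=> hz; set q := nv z.
have q0 : 0 <= q by apply: nv_ge0.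
have q01 : 0 <= q < 1 by rewrite q0 hz.
have h1q : 0 < 1 - q by rewrite subr_gt0.
have ne0 : 0 <= nv e by apply: nv_ge0.
have bound m n : (m <= n)%N -> nv (psum z n - psum z m) <= nv e * (q ^+ m / (1 - q)).
  move=> mn; rewrite /psum (@big_cat_nat _ _ _ m 0 n)//= addrAC subrr add0r.
  apply: (le_trans (nv_sum _ _)).
  apply: (le_trans (y := \sum_(m <= i < n) nv e * q ^+ i)).
    by apply: ler_sum => i _; apply: nv_pw.
  by rewrite -mulr_sumr ler_wpM2l// geom_le.
have qlim c : 0 < c -> exists N, forall n, (N <= n)%N -> q ^+ n <= c.
  move=> c0; have hq : `|q| < 1 by rewrite ger0_norm.
  have := cvg_expr hq; move/cvgr_dist_lt => /(_ c c0) /ev_ex [N hN].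
  exists N => n /hN; rewrite sub0r normrN ger0_norm ?exprn_ge0// => /ltW.
  done.
have hcauchy : cauchy_ex (psum z @ \oo).
  move=> eps /posC[-> ep]; set c := complex.Re eps.
  have c0 : 0 < c * (1 - q) / (nv e + 1).
    by rewrite divr_gt0 ?mulr_gt0// ltr_wpDl.
  have [N hN] := qlim _ c0.
  exists (psum z N); exists N => // n /= hn.
  rewrite -ball_normE /ball_ /= nvE ltcR' nvB.
  apply: (le_lt_trans (bound _ _ hn)).
  have hqN := hN _ (leqnn N).
  have ne1 : 0 < nv e + 1 by rewrite ltr_wpDl.
  apply: (le_lt_trans (y := nv e * (c * (1 - q) / (nv e + 1) / (1 - q)))).
    by rewrite ler_wpM2l// ler_pM2r ?invr_gt0.
  rewrite mulrAC mulfK ?lt0r_neq0// mulrCA.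
  rewrite -[X in _ < X]mulr1 ltr_pM2l// ltr_pdivrMr// mul1r.
  by rewrite ltrDl.
have hcv : cvg (psum z @ \oo) by apply: cauchy_cvg; apply: cauchy_exP.
set L := lim (psum z @ \oo).
have hL : forall c, 0 < c -> exists N, forall n, (N <= n)%N -> nv (L - psum z n) <= c.
  move=> c c0; have c0' : 0 < (c%:C)%C :> R[i] by rewrite -(rmorph0 (real_complex R)) ltcR'.
  have := hcv; move/cvgr_dist_lt => /(_ _ c0') /ev_ex [N hN].
  by exists N => n /hN; rewrite nvE ltcR' => /ltW.
have hp : forall c, 0 < c -> exists N, forall n, (N <= n)%N -> nv (pw z n) <= c.
  move=> c c0; have ne1 : 0 < nv e + 1 by rewrite ltr_wpDl.
  have [N hN] := qlim (c / (nv e + 1)) (divr_gt0 c0 ne1).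
  exists N => n /hN hn; apply: (le_trans (nv_pw _ _)).
  apply: (le_trans (y := (nv e + 1) * (c / (nv e + 1)))); last by rewrite mulrC mulfVK ?lt0r_neq0.
  apply: ler_pM => //; first by rewrite exprn_ge0.
  by rewrite lerDl.
have key : forall w, (forall n, nv (w n) <= nv (L - psum z n) * nv (e - z) + nv (pw z n)) -> forall eps, 0 < eps -> exists n, nv (w n) <= eps.
  move=> w hw eps ep.
  have ne1 : 0 < nv (e - z) + 1 by rewrite ltr_wpDl ?nv_ge0.
  have [N1 hN1] := hL (eps / 2 / (nv (e - z) + 1)) (divr_gt0 (divr_gt0 ep (ltr0Sn _ 1)) ne1).
  have [N2 hN2] := hp (eps / 2) (divr_gt0 ep (ltr0Sn _ 1)).
  exists (maxn N1 N2); apply: (le_trans (hw _)).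
  rewrite [X in _ <= X](splitr eps); apply: lerD; last by apply: hN2; rewrite leq_maxr.
  apply: (le_trans (y := eps / 2 / (nv (e - z) + 1) * (nv (e - z) + 1))); last by rewrite mulfVK ?lt0r_neq0.
  apply: ler_pM; rewrite ?nv_ge0 ?lerDl//; by apply: hN1; rewrite leq_maxl.
exists L; split.
  apply/eqP; rewrite -subr_eq0; apply/eqP/nv_small => eps ep.
  have hw : forall n, nv (L ** (e - z) - e) <= nv (L - psum z n) * nv (e - z) + nv (pw z n).
    move=> n; have -> : L ** (e - z) - e = (L - psum z n) ** (e - z) + (psum z n ** (e - z) - e).
      by rewrite bmulBl addrA subrK.
    rewrite psum_r [e - _ - _]addrAC subrr add0r.
    by apply: (le_trans (nvD _ _)); rewrite nvN lerD2r nvM.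
  by have [n hn] := key _ hw eps ep.
apply/eqP; rewrite -subr_eq0; apply/eqP/nv_small => eps ep.
have hw : forall n, nv ((e - z) ** L - e) <= nv (L - psum z n) * nv (e - z) + nv (pw z n).
  move=> n; have -> : (e - z) ** L - e = (e - z) ** (L - psum z n) + ((e - z) ** psum z n - e).
    by rewrite bmulBr addrA subrK.
  rewrite psum_l [e - _ - _]addrAC subrr add0r.
  by apply: (le_trans (nvD _ _)); rewrite nvN lerD2r mulrC nvM.
by have [n hn] := key _ hw eps ep.
Qed.

Lemma cm_psum z n : cm (psum z n) (e - z).
Proof.
elim: n => [|n IH]; first by rewrite /psum big_geq//; apply: cm_0.
rewrite /psum big_nat_recr//=; apply: cm_add => //.
apply: cm_pw; apply: cm_sym; apply: cm_sub; [apply: cm_e | apply: cm_refl].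
Qed.

Lemma isinv_pw_factor z M : isinv (e - pw z M) -> isinv (e - z).
Proof.
rewrite -psum_l => h; apply: (isinv_factor (x2 := psum z M)) => //.
exact: cm_sym (cm_psum z M).
Qed.

Lemma inv2_e_sub y P : inv2 (e - y) P -> P - e = P ** y.
Proof.
move=> [h1 _]; have <- : P - P ** y = e by rewrite -h1 bmulBr bmul1r'.
by rewrite opprB addrC subrK.
Qed.

Lemma IE y P : inv2 (e - y) P -> nv (P - e) <= 1/3 -> nv y <= 1/2.
Proof.
move=> hP hE.
have h := inv2_e_sub hP.
have hy : y = (P - e) - (P - e) ** y by rewrite bmulBl bmul1l' -h opprB addrC subrK.
have h1 : nv y <= nv (P - e) + nv (P - e) * nv y.
  by rewrite {1}hy (le_trans (nvD _ _))// nvN lerD2l nvM.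
have h2 : nv (P - e) * nv y <= 1/3 * nv y by rewrite ler_wpM2r ?nv_ge0.
have := nv_ge0 y; lra.
Qed.

Lemma IE2 y P : inv2 (e - y) P -> nv y <= 1/2 -> nv (P - e) <= 2 * nv e * nv y.
Proof.
move=> hP hy; have h := inv2_e_sub hP.
have h1 : nv (P - e) <= nv P * nv y by rewrite h nvM.
have h2 : nv P <= nv e + nv (P - e).
  by rewrite -{1}(subrK e P) addrC (le_trans (nvD _ _)).
have h3 : nv P * nv y <= nv P * (1/2) by rewrite ler_wpM2l ?nv_ge0.
have hP2 : nv P <= 2 * nv e by have := nv_ge0 e; lra.
apply: (le_trans h1); rewrite ler_wpM2r ?nv_ge0//.
Qed.

Lemma nc_half : nc (2^-1) = 2^-1.
Proof. by rewrite Normc.normcV normcMn Normc.normc1. Qed.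

Lemma nc1 : nc 1 = 1. Proof. exact: Normc.normc1. Qed.

Definition zeta (k : nat) : R[i] := (2 ^ k)%N.-root (-1).

Lemma zetaX k : zeta k ^+ (2 ^ k) = -1.
Proof. by rewrite /zeta rootCK// expn_gt0. Qed.

Lemma nc_zeta k : nc (zeta k) = 1.
Proof.
have h : nc (zeta k) ^+ (2 ^ k) = 1 by rewrite -ncX zetaX ncN nc1.
by apply/eqP; rewrite -(pexpr_eq1 (n := (2 ^ k)%N)) ?expn_gt0 ?nc_ge0// h.
Qed.

Lemma nc_Re (a b : R) : `|a| <= nc (a +i* b)%C.
Proof.
rewrite /Normc.normc -sqrtr_sqr; apply: ler_wsqrtr; rewrite lerDl sqr_ge0//.
Qed.

Lemma nc_Im (a b : R) : `|b| <= nc (a +i* b)%C.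
Proof.
rewrite /Normc.normc -sqrtr_sqr; apply: ler_wsqrtr; rewrite lerDr sqr_ge0//.
Qed.

Lemma nc_cplx (a b : R) : nc (a +i* b)%C <= `|a| + `|b|.
Proof.
have h : `|a| + `|b| = Num.sqrt ((`|a| + `|b|) ^+ 2).
  by rewrite sqrtr_sqr; apply/esym/ger0_norm; rewrite addr_ge0.
rewrite /Normc.normc [X in _ <= X]h.
apply: ler_wsqrtr; rewrite sqrrD !real_normK ?num_real//.
by rewrite -addrA lerD2l lerDr mulrn_wge0// mulr_ge0.
Qed.

Definition cpl (p : R * R) : R[i]^o := (p.1 +i* p.2)%C.

Lemma cpl_cont : continuous cpl.
Proof.
move=> [a b]; apply/cvgrPdist_lt => eps /posC [-> ep].
set c := complex.Re eps in ep *.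
have c2 : 0 < c / 2 by rewrite divr_gt0.
exists (ball a (c/2), ball b (c/2)); first by split; apply: nbhsx_ballx.
move=> [a' b'] [/= ha hb].
rewrite ncE ltcR'.
have -> : cpl (a, b) - cpl (a', b') = ((a - a') +i* (b - b'))%C by [].
apply: (le_lt_trans (nc_cplx _ _)).
move: ha hb; rewrite /ball /= => ha hb.
by rewrite [X in _ < X](splitr c) ltrD.
Qed.

Lemma disc_compact (rho : R) : 0 <= rho -> compact [set u : R[i]^o | nc u <= rho].
Proof.
move=> r0.
have hSq : compact (`[- rho, rho] `*` `[- rho, rho]) by apply: compact_setX; apply: segment_compact.
have hI := continuous_compact (continuous_subspaceT (A := `[- rho, rho] `*` `[- rho, rho]) cpl_cont) hSq.
apply: (subclosed_compact _ hI).
  move=> u hu; rewrite /= leNgt; apply/negP => hlt.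
  have r1 : 0 < nc u - rho by rewrite subr_gt0.
  have r1' : 0 < ((nc u - rho)%:C)%C :> R[i] by rewrite -(rmorph0 (real_complex R)) ltcR'.
  have [v [/= hv hb]] := hu _ (nbhsx_ballx u _ r1').
  move: hb; rewrite /ball /= ncE ltcR' => hb.
  have := ncD v (u - v); rewrite addrC subrK; lra.
move=> u /= hu; exists (complex.Re u, complex.Im u); last by case: u hu.
case: u hu => a b /= hu; split => /=; rewrite in_itv /= -ler_norml.
  by apply: le_trans hu; apply: nc_Re.
by apply: le_trans hu; apply: nc_Im.
Qed.

Section Gelfand.
Variables (z : V) (rho : R).
Hypothesis rho0 : 0 < rho.
Hypothesis hinv : forall u : R[i], nc u <= rho -> isinv (e - u *: z).

Definition g (u : R[i]) : V := xget 0 (fun y => inv2 (e - u *: z) y).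

Lemma g_inv u : nc u <= rho -> inv2 (e - u *: z) (g u).
Proof. by move=> h; apply: xgetPex; apply: hinv. Qed.

Lemma g_res u v : nc u <= rho -> nc v <= rho ->
  g u - g v = (u - v) *: (g u ** z ** g v).
Proof.
move=> hu hv; have [hu1 hu2] := g_inv hu; have [hv1 hv2] := g_inv hv.
have e1 : g u = g u ** (e - v *: z) ** g v by rewrite -bmulA' hv2 bmul1r'.
have e2 : g v = g u ** (e - u *: z) ** g v by rewrite hu1 bmul1l'.
transitivity (g u ** (e - v *: z) ** g v - g u ** (e - u *: z) ** g v); first by rewrite -e1 -e2.
rewrite -bmulBl -bmulBr.
have -> : e - v *: z - (e - u *: z) = (u - v) *: z.
  by rewrite opprB addrC addrA subrK scalerBl.
by rewrite bmulZr' bmulZl'.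
Qed.

Lemma gbound : exists M, 0 < M /\ forall u, nc u <= rho -> nv (g u) <= M.
Proof.
have Dc := disc_compact (ltW rho0).
have := (compact_near_coveringP _).1 Dc R (pinfty_nbhs R) (fun M u => nc u <= rho -> nv (g u) <= M) _.
case.
- move=> u0 /= hu0.
  set c := nv (g u0) * nv z + 1.
  have c0 : 0 < c by rewrite ltr_wpDl ?mulr_ge0 ?nv_ge0.
  have r0 : 0 < ((1 / (2 * c))%:C)%C :> R[i].
    by rewrite -(rmorph0 (real_complex R)) ltcR' divr_gt0// mulr_gt0.
  exists (ball u0 ((1 / (2 * c))%:C)%C, [set M | 2 * nv (g u0) < M]).
    split; first exact: nbhsx_ballx.
    by apply: nbhs_pinfty_gt; apply: num_real.
  move=> [u M] [/= hb hM] hu.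
  move: hb; rewrite /ball /= ncE ltcR' => hb.
  have hr := g_res hu0 hu.
  have h1 : nv (g u) <= nv (g u0) + nv (g u0 - g u).
    have e' : g u = g u0 + - (g u0 - g u) by rewrite opprB addrCA subrr addr0.
    by rewrite {1}e' (le_trans (nvD _ _))// nvN.
  have h2 : nv (g u0 - g u) <= nc (u0 - u) * (nv (g u0) * nv z * nv (g u)).
    rewrite hr nvZ ler_wpM2l ?nc_ge0//.
    by apply: (le_trans (nvM _ _)); rewrite ler_wpM2r ?nv_ge0// nvM.
  have h3 : nc (u0 - u) * (nv (g u0) * nv z * nv (g u)) <= 1 / (2 * c) * (c * nv (g u)).
    rewrite mulrA [X in _ <= X]mulrA ler_wpM2r ?nv_ge0//.
    apply: ler_pM.
    - exact: nc_ge0.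
    - by rewrite mulr_ge0 ?nv_ge0.
    - exact: ltW.
    - by rewrite /c lerDl.
  have h4 : 1 / (2 * c) * (c * nv (g u)) = nv (g u) / 2.
    have cn : c != 0 := lt0r_neq0 c0.
    by field.
  rewrite h4 in h3.
  lra.
- move=> M0 [_ hM0].
  exists (`|M0| + 1); split; first by rewrite ltr_wpDl.
  move=> u hu; apply: (hM0 (`|M0| + 1)) => //.
  by rewrite (le_lt_trans (ler_norm M0))// ltrDl.
Qed.

Fixpoint A (k : nat) (u : R[i]) : V :=
  match k with
  | 0 => g u
  | k'.+1 => 2^-1 *: (A k' u + A k' (zeta k' * u))
  end.

Lemma nc_zetaM k u : nc (zeta k * u) = nc u.
Proof. by rewrite ncM nc_zeta mul1r. Qed.

Lemma A_inv k u : nc u <= rho -> inv2 (e - (u ^+ (2 ^ k)) *: pw z (2 ^ k)) (A k u).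
Proof.
elim: k u => [|k IH] u hu; first by rewrite expn0 expr1 pw1; apply: g_inv.
set y := u ^+ (2 ^ k) *: pw z (2 ^ k).
have [P1 P2] := IH u hu.
have hzu : nc (zeta k * u) <= rho by rewrite nc_zetaM.
have [Q1 Q2] := IH (zeta k * u) hzu.
rewrite -/y in P1 P2.
have hyQ : (zeta k * u) ^+ (2 ^ k) *: pw z (2 ^ k) = - y.
  by rewrite exprMn zetaX mulN1r scaleNr.
rewrite hyQ opprK in Q1 Q2.
have hyy : u ^+ (2 ^ k.+1) *: pw z (2 ^ k.+1) = y ** y.
  by rewrite bmulZl' bmulZr' scalerA -exprD -pwD expnS mul2n -addnn.
rewrite hyy.
have f1 : e - y ** y = (e - y) ** (e + y).
  by rewrite bmulBl bmul1l' (bmulDr B) bmul1r' opprD addrA addrK.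
have f2 : e - y ** y = (e + y) ** (e - y).
  by rewrite (bmulDl B) bmul1l' bmulBr bmul1r' addrA subrK.
have h2 : (2^-1 : R[i]) *: (e + e) = e.
  rewrite scalerDr -scalerDl.
  have -> : (2^-1 + 2^-1 : R[i]) = 1 by rewrite [RHS](splitr 1) mul1r.
  by rewrite scale1r.
split=> /=.
  rewrite bmulZl' (bmulDl B); rewrite {1}f1 {1}f2 !bmulA' P1 Q1 !bmul1l'.
  by rewrite addrACA subrr addr0 h2.
rewrite bmulZr' (bmulDr B); rewrite {1}f2 {1}f1 -!bmulA' P2 Q2 !bmul1r'.
by rewrite addrACA subrr addr0 h2.
Qed.


Lemma g_lip M : (forall u, nc u <= rho -> nv (g u) <= M) ->
  forall u v, nc u <= rho -> nc v <= rho ->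
  nv (g u - g v) <= nc (u - v) * (M * M * nv z).
Proof.
move=> hM u v hu hv; rewrite g_res// nvZ ler_wpM2l ?nc_ge0//.
have M0 : 0 <= M by apply: le_trans (hM _ hu); apply: nv_ge0.
apply: (le_trans (nvM _ _)); rewrite [X in _ <= X]mulrAC.
apply: ler_pM; rewrite ?nv_ge0 ?hM//.
apply: (le_trans (nvM _ _)); apply: ler_pM; rewrite ?nv_ge0 ?hM//.
Qed.

Lemma A_lip M : (forall u, nc u <= rho -> nv (g u) <= M) ->
  forall k u v, nc u <= rho -> nc v <= rho ->
  nv (A k u - A k v) <= nc (u - v) * (M * M * nv z).
Proof.
move=> hM; elim=> [|k IH] u v hu hv /=; first exact: g_lip.
rewrite -scalerBr nvZ nc_half.
have -> : A k u + A k (zeta k * u) - (A k v + A k (zeta k * v)) =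
          (A k u - A k v) + (A k (zeta k * u) - A k (zeta k * v)).
  by rewrite opprD addrACA.
have h1 := IH u v hu hv.
have h2 : nv (A k (zeta k * u) - A k (zeta k * v)) <= nc (u - v) * (M * M * nv z).
  have := IH (zeta k * u) (zeta k * v); rewrite !nc_zetaM -mulrBr nc_zetaM.
  by apply.
have h3 := nvD (A k u - A k v) (A k (zeta k * u) - A k (zeta k * v)).
set X := nc (u - v) * (M * M * nv z) in h1 h2 *.
have : 2^-1 * nv (A k u - A k v + (A k (zeta k * u) - A k (zeta k * v))) <= 2^-1 * (X + X).
  by rewrite ler_wpM2l ?invr_ge0 ?ler0n// (le_trans h3)// lerD.
by move=> h; apply: (le_trans h); lra.
Qed.

Definition Pr s := forall c, 0 < c -> exists K, forall k, (K <= k)%N ->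
  s ^+ (2 ^ k) * nv (pw z (2 ^ k)) <= c.

Lemma Pr0 : Pr 0.
Proof.
move=> c c0; exists 0%N => k _; rewrite expr0n /= expn_eq0 /= mul0r.
exact: ltW.
Qed.

Lemma Pr_down s2 s : 0 <= s -> s < s2 ->
  (exists K, forall k, (K <= k)%N -> s2 ^+ (2 ^ k) * nv (pw z (2 ^ k)) <= 1/2) -> Pr s.
Proof.
move=> s0 ss2 [K hK] c c0.
have s20 : 0 < s2 by apply: le_lt_trans ss2.
set q := s / s2.
have q0 : 0 <= q by rewrite divr_ge0// ltW.
have q1 : q < 1 by rewrite ltr_pdivrMr// mul1r.
have hq : `|q| < 1 by rewrite ger0_norm.
have := cvg_expr hq; move/cvgr_dist_lt => /(_ (2 * c)) [|N _ hN].
  by rewrite mulr_gt0.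
exists (maxn K N) => k hk.
have hqk : q ^+ (2 ^ k) <= 2 * c.
  apply: (le_trans (y := q ^+ k)).
    by apply: ler_wiXn2l => //; [apply: ltW | apply: ltnW; apply: ltn_expl].
  have := hN k (leq_trans (leq_maxr K N) hk).
  by rewrite /= sub0r normrN ger0_norm ?exprn_ge0// => /ltW.
have -> : s = q * s2 by rewrite /q mulfVK ?lt0r_neq0.
rewrite exprMn -mulrA.
apply: (le_trans (y := q ^+ (2 ^ k) * (1/2))).
  by rewrite ler_wpM2l ?exprn_ge0// hK// (leq_trans (leq_maxl K N)).
have : q ^+ (2 ^ k) * (1/2) <= 2 * c * (1/2) by rewrite ler_wpM2r.
lra.
Qed.

Lemma nv_sC (s : R) n x : 0 <= s -> nv (((s%:C)%C) ^+ n *: x) = s ^+ n * nv x.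
Proof. by move=> s0; rewrite nvZ ncX ncR ger0_norm. Qed.

Lemma step M delta : (forall u, nc u <= rho -> nv (g u) <= M) ->
  0 < delta -> delta * (M * M * nv z) <= 1/6 ->
  forall s1 s2, 0 <= s1 <= rho -> 0 <= s2 <= rho -> `|s2 - s1| <= delta ->
  Pr s1 -> exists K, forall k, (K <= k)%N -> s2 ^+ (2 ^ k) * nv (pw z (2 ^ k)) <= 1/2.
Proof.
move=> hM d0 hd s1 s2 /andP[s10 s1r] /andP[s20 s2r] hs hP.
have ne1 : 0 < nv e + 1 by rewrite ltr_wpDl ?nv_ge0.
have c0 : 0 < 1 / (12 * (nv e + 1)) by rewrite divr_gt0// mulr_gt0.
have [K hK] := hP _ c0.
exists K => k /hK hk.
have hu1 : nc ((s1%:C)%C) <= rho by rewrite ncR ger0_norm.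
have hu2 : nc ((s2%:C)%C) <= rho by rewrite ncR ger0_norm.
have i1 := A_inv k hu1; have i2 := A_inv k hu2.
rewrite -nv_sC//; apply: (IE i2).
have hc : 1 / (12 * (nv e + 1)) <= 1/2.
  rewrite ler_pdivrMr ?mulr_gt0// mulrC mulrA. 
  have := nv_ge0 e; lra.
have hy1 : nv (((s1%:C)%C) ^+ (2 ^ k) *: pw z (2 ^ k)) <= 1/2.
  by rewrite nv_sC// (le_trans hk).
have e1 := IE2 i1 hy1.
have e1' : 2 * nv e * nv (((s1%:C)%C) ^+ (2 ^ k) *: pw z (2 ^ k)) <= 1/6.
  rewrite nv_sC//; apply: (le_trans (y := 2 * nv e * (1 / (12 * (nv e + 1))))).
    by rewrite ler_wpM2l ?mulr_ge0 ?nv_ge0.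
  rewrite mulrA ler_pdivrMr ?mulr_gt0//.
  have := nv_ge0 e; lra.
have l := A_lip hM k hu2 hu1.
have l' : nc ((s2%:C)%C - (s1%:C)%C) * (M * M * nv z) <= 1/6.
  rewrite -rmorphB ncR; apply: le_trans hd; rewrite ler_wpM2r//.
  have h0 : nc 0 <= rho by rewrite Normc.normc0 ltW.
  have M0 : 0 <= M := le_trans (nv_ge0 (g 0)) (hM 0 h0).
  by rewrite !mulr_ge0 ?nv_ge0.
have := nvD (A k ((s2%:C)%C) - A k ((s1%:C)%C)) (A k ((s1%:C)%C) - e).
rewrite addrA subrK; lra.
Qed.


Lemma gelfand_Pr s : 0 <= s -> s < rho -> Pr s.
Proof.
have [M [M0 hM]] := gbound.
set L := M * M * nv z.
have L0 : 0 <= L by rewrite /L !mulr_ge0 ?nv_ge0 ?ltW.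
set d := 1 / (6 * (L + 1)).
have L1 : 0 < 6 * (L + 1) by rewrite mulr_gt0// ltr_wpDl.
have d0 : 0 < d by rewrite divr_gt0.
have hd : d * L <= 1/6.
  rewrite /d mulrC mulrA ler_pdivrMr//; lra.
have ind : forall n : nat, forall s, 0 <= s -> s < rho -> s <= n%:R * (d/2) -> Pr s.
  elim=> [|n IH] s' s0 sr sn.
    have -> : s' = 0 by move: sn; rewrite mul0r; lra.
    exact: Pr0.
  move: sn; rewrite -natr1 mulrDl mul1r => sn.
  have [s1 [s10 s1r hs1P hs1]] : exists s1, [/\ 0 <= s1, s1 <= s', Pr s1 & s' - s1 <= d/2].
    case: (leP s' (d/2)) => h.
      by exists 0; split => //; [exact: Pr0 | lra].
    exists (s' - d/2); split; [lra | lra | apply: IH; lra | lra].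
  have [s2 [s2r ss2 hs2]] : exists s2, [/\ s2 <= rho, s' < s2 & s2 - s' <= d/4].
    case: (leP rho (s' + d/4)) => h.
      by exists rho; split; lra.
    by exists (s' + d/4); split; lra.
  apply: (Pr_down s0 ss2); apply: (step hM d0 hd (s1 := s1)) => //.
  - by apply/andP; split; lra.
  - by apply/andP; split; lra.
  - by rewrite ger0_norm; lra.
move=> s0 sr.
apply: (ind (Num.Def.trunc (s / (d/2))).+1) => //.
have := truncnS_gt (s / (d/2)); rewrite ltr_pdivrMr ?divr_gt0// => /ltW.
done.
Qed.

End Gelfand.

Lemma spec_isinv x l : ~ spectrum B x l -> isinv (l *: e - x).
Proof. by move=> h; apply: contrapT. Qed.

Lemma isinv_spec x l : isinv (l *: e - x) -> ~ spectrum B x l.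
Proof. by move=> h; apply. Qed.

Lemma nv_pw_d d eps k : 0 <= eps -> nv (pw d 2) <= eps ^+ 2 ->
  nv (pw d (2 ^ k.+1)) <= eps ^+ (2 ^ k.+1).
Proof.
move=> e0 hd; rewrite !expnS pwM exprM.
move: (expn_gt0 2 k); case: (2 ^ k)%N => // n _.
apply: (le_trans (nv_pwS _ _)).
have h1 : 0 <= nv (pw d 2) := nv_ge0 _.
have h2 : 0 <= eps ^+ 2 := le_trans h1 hd.
exact: (lerXn2r n.+1 h1 h2 hd).
Qed.

Lemma key x y eps : 0 < eps -> cm x y -> nv (pw (x - y) 2) <= eps ^+ 2 ->
  forall l, spectrum B x l -> exists m, spectrum B y m /\ nc (l - m) <= 2 * eps.
Proof.
move=> e0 cxy hd l hl.
case: (pselect (exists m, spectrum B y m /\ nc (l - m) <= 2 * eps)) => // hno.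
exfalso; apply: hl.
have hinvy : forall u, nc u <= 3/2 * eps -> isinv ((l - u) *: e - y).
  move=> u hu; apply: spec_isinv => hs; apply: hno; exists (l - u); split => //.
  by rewrite opprB addrC subrK; lra.
have [Rz hRz] : isinv (l *: e - y) by rewrite -[l]subr0; apply: hinvy; rewrite Normc.normc0; lra.
have cy : cm (l *: e - y) y by apply: cm_sub; [apply: cm_scale; apply: cm_e | apply: cm_refl].
have cx : cm (l *: e - y) x.
  apply: cm_sub; [apply: cm_scale; apply: cm_e | exact: (cm_sym cxy)].
have cRy : cm Rz y := cm_inv cy hRz.
have cRx : cm Rz x := cm_inv cx hRz.
have cRd : cm Rz (x - y) by apply: cm_sym; apply: cm_sub; apply: cm_sym.
have hz : forall u, nc u <= 3/2 * eps -> isinv (e - u *: Rz).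
  move=> u hu.
  have -> : e - u *: Rz = Rz ** ((l - u) *: e - y).
    have -> : (l - u) *: e - y = (l *: e - y) - u *: e by rewrite scalerBl addrAC.
    by case: hRz => h1 h2; rewrite bmulBr h1 bmulZr' bmul1r'.
  apply: isinv_mul; [by exists (l *: e - y); split; case: hRz | exact: hinvy].
have r0 : 0 < 3/2 * eps by rewrite mulr_gt0.
have es : eps < 3/2 * eps by lra.
have c0 : 0 < 1/2 :> R by [].
have [K hK] := gelfand_Pr r0 hz (ltW e0) es c0.
have hk := hK K.+1 (leqnSn K).
set M := (2 ^ K.+1)%N in hk.
have hd2 := nv_pw_d K (ltW e0) hd; rewrite -/M in hd2.
have hRd : isinv (e - Rz ** (x - y)).
  apply: (isinv_pw_factor (M := M)); apply: neumann.
  rewrite pw_mul//; apply: (le_lt_trans (nvM _ _)).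
  apply: (le_lt_trans (y := nv (pw Rz M) * eps ^+ M)).
    by rewrite ler_wpM2l ?nv_ge0.
  by rewrite mulrC; apply: (le_lt_trans hk); lra.
have -> : l *: e - x = (l *: e - y) ** (e - Rz ** (x - y)).
  case: hRz => h1 h2.
  by rewrite bmulBr bmul1r' bmulA' h2 bmul1l' opprB addrA subrK.
apply: isinv_mul => //; by exists Rz.
Qed.

Lemma pw2 x : pw x 2 = x ** x.
Proof. by rewrite pwS pw1. Qed.

End BA.

Lemma ecvg0 (R : realType) (h : nat -> \bar R) :
  (forall eps : R, 0 < eps -> exists N, forall n, (N <= n)%N -> (0 <= h n <= eps%:E)%E) ->
  h @ \oo --> 0%E.
Proof.
move=> H; apply/fine_cvgP; split.
  have [N hN] := H 1 ltr01; exists N => // n /= /hN /andP[h0 h1].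
  rewrite fin_numElt; apply/andP; split.
    by apply: (lt_le_trans _ h0).
  by apply: (le_lt_trans h1); rewrite ltry.
apply/cvgrPdist_le => eps ep; have [N hN] := H eps ep; exists N => // n /= /hN.
case: (h n) => [r| |] /andP[r0 re].
- have r0' : 0 <= r := r0; have re' : r <= eps := re.
  by rewrite /= sub0r normrN ger0_norm.
- by rewrite leye_eq in re.
- by rewrite leeNy_eq in r0.
Qed.

Unset Implicit Arguments.

Theorem proposition2p1 (R : realType) (V : completeNormedModType R[i])
    (B : banach_alg V) (a : V) (a_ : nat -> V) :
  (forall n, bmul B (a_ n) a = bmul B a (a_ n)) ->
  (forall n m, bmul B (a_ n) (a_ m) = bmul B (a_ m) (a_ n)) ->
  nu_cvg B a_ a ->
  limit_point (spectrum B a) 0 ->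
  (fun n => hausdorff_dist (spectrum B (a_ n)) (spectrum B a)) @ \oo --> 0%E.
Proof.
move=> hc _ [_ h1 h2] hlim.
have [m0 [_ hm0 _]] := hlim setT filterT.
have c1 : forall c : R, 0 < c -> exists N, forall n, (N <= n)%N -> nv (bmul B (a_ n - a) a) < c.
  move=> c c0.
  have c0' : 0 < ((c%:C)%C) :> R[i] by rewrite -(rmorph0 (real_complex R)) ltcR'.
  move/cvgr_dist_lt: h1 => /(_ _ c0') /ev_ex [N hN].
  by exists N => n /hN; rewrite sub0r normrN normr_id nvE ltcR'.
have c2 : forall c : R, 0 < c -> exists N, forall n, (N <= n)%N -> nv (bmul B (a_ n - a) (a_ n)) < c.
  move=> c c0.
  have c0' : 0 < ((c%:C)%C) :> R[i] by rewrite -(rmorph0 (real_complex R)) ltcR'.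
  move/cvgr_dist_lt: h2 => /(_ _ c0') /ev_ex [N hN].
  by exists N => n /hN; rewrite sub0r normrN normr_id nvE ltcR'.
have conv : forall c : R, 0 < c -> exists N, forall n, (N <= n)%N -> nv (pw B (a_ n - a) 2) <= c.
  move=> c c0; have c20 : 0 < c / 2 by rewrite divr_gt0.
  have [N1 hN1] := c1 _ c20; have [N2 hN2] := c2 _ c20.
  exists (maxn N1 N2) => n hn.
  have := hN1 n (leq_trans (leq_maxl _ _) hn); have := hN2 n (leq_trans (leq_maxr _ _) hn).
  rewrite pw2 {1 3}[a_ n - a]/(a_ n - a) bmulBr => hA hB.
  have := nvD (bmul B (a_ n - a) (a_ n)) (- bmul B (a_ n - a) a); rewrite nvN.
  lra.
apply: ecvg0 => eps ep.
have e2 : 0 < eps / 2 by rewrite divr_gt0.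
have [N hN] := conv ((eps / 2) ^+ 2) (exprn_gt0 _ e2).
exists N => n hn.
have hd := hN n hn.
have hA := key e2 (hc n) hd.
have hd' : nv (pw B (a - a_ n) 2) <= (eps / 2) ^+ 2.
  by rewrite pw2 -opprB bmulNl bmulNr opprK -pw2.
have hB := key e2 (esym (hc n)) hd'.
have e2e : 2 * (eps / 2) = eps by rewrite mulrC mulfVK ?pnatr_eq0.
rewrite e2e in hA hB.
rewrite /hausdorff_dist; apply/andP; split.
  rewrite le_max; apply/orP; right.
  apply: (@le_trans _ _ (ereal_inf [set (cdist x m0)%:E | x in spectrum B (a_ n)])); last first.
    by apply: ereal_sup_ubound; exists m0.
  by apply: le_ereal_inf_tmp => _ [x _ <-]; rewrite lee_fin /cdist nc_ge0.
rewrite ge_max; apply/andP; split; apply: ge_ereal_sup => _ [x hx <-].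
  have [m [hm hxm]] := hA x hx.
  apply: (@le_trans _ _ (cdist x m)%:E); first by apply: ereal_inf_lbound; exists m.
  by rewrite lee_fin.
have [l [hl hxl]] := hB x hx.
apply: (@le_trans _ _ (cdist l x)%:E); first by apply: ereal_inf_lbound; exists l.
by rewrite lee_fin /cdist ncB.
Qed.
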